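(* Let $\mathcal H$ be a separable complex Hilbert space, $A_1,A_2\in L(\mathcal H)^+$, $B\in L(\mathcal H)$ with closed range. If $G\in L(\mathcal H)$ is an $A_1A_2$-inverse of $B$, then (1) $A_1BGB=A_1B$ and $A_1BG=(BG)^*A_1$; (2) $A_2GBG=A_2G$ and $A_2GB=(GB)^*A_2$.
   Context: $\|z\|_{A}=\langle Az,z\rangle^{1/2}$ for $A\in L(\mathcal H)^+$. For $y\in\mathcal H$, $x_0$ is an $A_1$-least squares solution ($A_1$-LSS) of $Bx=y$ if $\|y-Bx_0\|_{A_1}\le\|y-Bx\|_{A_1}$ for all $x\in\mathcal H$. $G$ is an $A_1$-inverse of $B$ if $Gy$ is an $A_1$-LSS of $Bx=y$ for every $y$. $G$ is an $A_1A_2$-inverse of $B$ if $G$ is an $A_1$-inverse of $B$ and, for each $y\in\mathcal H$, $\|Gy\|_{A_2}\le\|x_0\|_{A_2}$ for every $A_1$-LSS $x_0$ of $Bx=y$. *)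

(* Defs.v *)
From HB Require Import structures.
From mathcomp Require Import all_boot all_order all_algebra.
From mathcomp Require Import reals complex.
Set Implicit Arguments. Unset Strict Implicit. Unset Printing Implicit Defensive.
Import Order.TTheory GRing.Theory Num.Theory.
Local Open Scope ring_scope.
Local Open Scope complex_scope.

Section Hilbert.
Variable R : realType.
Variables (H : lmodType R[i]) (ip : H -> H -> R[i]).

Definition ipnorm (x : H) : R := Num.sqrt (complex.Re (ip x x)).

Definition cvg_to (u : nat -> H) (y : H) : Prop :=
  forall e : R, 0 < e -> exists N : nat, forall n, (N <= n)%N -> ipnorm (u n - y) < e.

Definition cauchy (u : nat -> H) : Prop :=
  forall e : R, 0 < e -> exists N : nat, forall n m, (N <= n)%N -> (N <= m)%N ->
    ipnorm (u n - u m) < e.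

Definition separable_hilbert : Prop :=
  [/\ ((forall (a : R[i]) (x y z : H), ip (a *: x + y) z = a * ip x z + ip y z) /\
      (forall x y : H, ip x y = (ip y x)^*)),
      (forall x : H, 0 <= ip x x),
      (forall x : H, ip x x = 0 -> x = 0),
      (forall u : nat -> H, cauchy u -> exists y, cvg_to u y) &
      (exists d : nat -> H, forall (x : H) (e : R), 0 < e ->
          exists n, ipnorm (x - d n) < e)].

Definition bounded_op (T : H -> H) : Prop :=
  (forall (a : R[i]) (x y : H), T (a *: x + y) = a *: T x + T y) /\
  (exists M : R, forall x, ipnorm (T x) <= M * ipnorm x).

Definition positive_op (A : H -> H) : Prop :=
  bounded_op A /\ forall x, 0 <= ip (A x) x.

Definition closed_range (T : H -> H) : Prop :=
  forall (u : nat -> H) (y : H), cvg_to (fun n => T (u n)) y -> exists x, T x = y.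

Definition is_adjoint (T S : H -> H) : Prop :=
  forall x y, ip (T x) y = ip x (S y).

Definition Anorm (A : H -> H) (z : H) : R := Num.sqrt (complex.Re (ip (A z) z)).

Definition is_LSS (A1 B : H -> H) (y x0 : H) : Prop :=
  forall x, Anorm A1 (y - B x0) <= Anorm A1 (y - B x).

Definition A_inverse (A1 B G : H -> H) : Prop :=
  forall y, is_LSS A1 B y (G y).

Definition AA_inverse (A1 A2 B G : H -> H) : Prop :=
  A_inverse A1 B G /\
  forall y x0, is_LSS A1 B y x0 -> Anorm A2 (G y) <= Anorm A2 x0.

End Hilbert.

(* Main.v *)
Require Import Defs.
From HB Require Import structures.
From mathcomp Require Import all_boot all_order all_algebra.
From mathcomp Require Import reals complex.
Import Order.TTheory GRing.Theory Num.Theory.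
Local Open Scope ring_scope.
Local Open Scope complex_scope.
From mathcomp Require Import ring lra.
Lemma form_lin (R : realType) (H : lmodType R[i]) (F : H -> H -> R[i])
 (hF1 : forall a x y z, F (a *: x + y) z = a * F x z + F y z) :
 (forall z, F 0 z = 0) /\ (forall x y z, F (x + y) z = F x z + F y z) /\
 (forall a x z, F (a *: x) z = a * F x z).
Proof.
have h0 : forall z, F 0 z = 0.
  move=> z; have := hF1 1 0 0 z; rewrite scaler0 addr0 mul1r.
  by move=> e; apply: (addrI (F 0 z)); rewrite addr0 -e.
split=> //; split=> [x y z|a x z].
  by have := hF1 1 x y z; rewrite scale1r mul1r.
by have := hF1 a x 0 z; rewrite addr0 h0 addr0.
Qed.

Lemma ge0_conj (R : realType) (z : R[i]) : 0 <= z -> z^* = z.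
Proof. by case: z => a b; rewrite lecE /= => /andP [/eqP -> _]; rewrite oppr0. Qed.

Arguments ge0_conj {R z}.
Lemma form_herm (R : realType) (H : lmodType R[i]) (F : H -> H -> R[i])
 (hF1 : forall a x y z, F (a *: x + y) z = a * F x z + F y z)
 (hF2 : forall a x y z, F z (a *: x + y) = a^* * F z x + F z y)
 (hFp : forall x, 0 <= F x x) : forall x y, F y x = (F x y)^*.
Proof.
move=> x y.
have e1 := ge0_conj (hFp (1 *: x + y)).
have e2 := ge0_conj (hFp ('i *: y + x)).
rewrite hF1 !hF2 in e1; rewrite hF1 !hF2 in e2.
move: e1 e2 (ger0_Im (hFp x)) (ger0_Im (hFp y)).
case: (F x y) => s1 s2; case: (F y x) => t1 t2.
case: (F x x) => p1 p2; case: (F y y) => q1 q2.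
simpc => -[e1] [e2] /= hp hq. congr Complex; lra.
Qed.

Lemma form_min (R : realType) (H : lmodType R[i]) (F : H -> H -> R[i])
 (hF1 : forall a x y z, F (a *: x + y) z = a * F x z + F y z)
 (hF2 : forall a x y z, F z (a *: x + y) = a^* * F z x + F z y)
 (hFp : forall x, 0 <= F x x) (r v : H) :
 (forall a, complex.Re (F r r) <= complex.Re (F (r + a *: v) (r + a *: v))) -> F r v = 0.
Proof.
move=> hmin.
have hh := @form_herm _ _ F hF1 hF2 hFp.
have := hmin (Complex (- (((complex.Re (F v v)) + 1)^-1 * complex.Re (F r v)))
                      (- (((complex.Re (F v v)) + 1)^-1 * complex.Im (F r v)))).
rewrite addrC hF1 !hF2 (hh r v).
move: (ger0_Im (hFp v)) (hFp v).
case: (F r v) => w1 w2; case: (F v v) => d1 d2; case: (F r r) => p1 p2.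
rewrite /= => -> /andP [_ d0].
set t := (d1 + 1)^-1.
have t0 : 0 < t by rewrite invr_gt0; lra.
have td : t * (d1 + 1) = 1 by rewrite mulVf //; apply/eqP; lra.
simpc. rewrite /= => h.
set s := w1 * w1 + w2 * w2.
have s0 : 0 <= s by rewrite /s addr_ge0 // -expr2 sqr_ge0.
have h2 : 0 <= t * (t * s * d1 - 2 * s).
  suff -> : t * (t * s * d1 - 2 * s) = - (t * w1 * (- (t * w1 * d1) + w1)) + t * w2 * (t * w2 * d1 - w2) +
  (- (t * w1 * w1) - t * w2 * w2 + p1) - p1 by lra.
  rewrite /s; ring.
rewrite pmulr_rge0 // in h2.
have h3 : t * s * d1 = s - t * s.
  have -> : s - t * s = s * (t * (d1 + 1)) - t * s by rewrite td mulr1.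
  ring.
have h4 : s <= 0 by nra.
have q1 := sqr_ge0 w1; have q2 := sqr_ge0 w2; rewrite expr2 in q1 q2.
have e1 : w1 = 0.
  have : w1 * w1 = 0 by move: h4; rewrite /s; lra.
  by move/eqP; rewrite mulf_eq0 orbb => /eqP.
have e2 : w2 = 0.
  have : w2 * w2 = 0 by move: h4; rewrite /s; lra.
  by move/eqP; rewrite mulf_eq0 orbb => /eqP.
by rewrite e1 e2.
Qed.

Lemma op_lin (R : realType) (H : lmodType R[i]) (T : H -> H)
 (hT : forall (a : R[i]) x y, T (a *: x + y) = a *: T x + T y) :
 [/\ T 0 = 0, (forall x y, T (x + y) = T x + T y), (forall a x, T (a *: x) = a *: T x)
   & (forall x y, T (x - y) = T x - T y)].
Proof.
have h0 : T 0 = 0.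
  have := hT 1 0 0; rewrite scaler0 addr0 scale1r.
  by move=> e; apply: (addrI (T 0)); rewrite addr0 -e.
have hD : forall x y, T (x + y) = T x + T y.
  by move=> x y; have := hT 1 x y; rewrite !scale1r.
have hZ : forall a x, T (a *: x) = a *: T x.
  by move=> a x; have := hT a x 0; rewrite !addr0 h0 addr0.
split=> // x y; by rewrite -scaleN1r hD hZ scaleN1r.
Qed.

Lemma Re_ge0 (R : realType) (z : R[i]) : 0 <= z -> 0 <= complex.Re z.
Proof. by rewrite lecE => /andP [_]. Qed.

Theorem mainTheorem17 (R : realType) (H : lmodType R[i]) (ip : H -> H -> R[i])
  (hH : separable_hilbert ip)
  (A1 A2 B G : H -> H)
  (hA1 : positive_op ip A1) (hA2 : positive_op ip A2)
  (hB : bounded_op ip B) (hBr : closed_range ip B)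
  (hG : bounded_op ip G) (hAA : AA_inverse ip A1 A2 B G) :
  ((forall x, A1 (B (G (B x))) = A1 (B x)) /\
   (forall S, is_adjoint ip (fun x => B (G x)) S ->
      forall x, A1 (B (G x)) = S (A1 x))) /\
  ((forall x, A2 (G (B (G x))) = A2 (G x)) /\
   (forall S, is_adjoint ip (fun x => G (B x)) S ->
      forall x, A2 (G (B x)) = S (A2 x))).
Proof.
case: hH => [[hlin hsym] hpos hdef _ _].
case: hA1 => [[A1lin _] A1pos]; case: hA2 => [[A2lin _] A2pos].
case: hB => [Blin _]; case: hAA => [hG1 hG2].
have ip2 : forall a x y z, ip z (a *: x + y) = a^* * ip z x + ip z y.
  move=> a x y z; rewrite hsym hlin (hsym z x) (hsym z y).
  by rewrite rmorphD rmorphM.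
have [ip01 [ipD1 ipZ1]] := @form_lin _ _ _ hlin.
have ipB2 : forall x y z, ip z (x - y) = ip z x - ip z y.
  move=> x y z; rewrite -scaleN1r addrC ip2 rmorphN1 mulN1r addrC //.
have ipB1 : forall x y z, ip (x - y) z = ip x z - ip y z.
  move=> x y z; rewrite -scaleN1r addrC hlin mulN1r addrC //.
have nondeg : forall a b, (forall z, ip z a = ip z b) -> a = b.
  move=> a b h; apply/eqP; rewrite -subr_eq0; apply/eqP; apply: hdef.
  by rewrite ipB2 h subrr.
have [A10 A1D A1Z A1B] := @op_lin _ _ _ A1lin.
have [A20 A2D A2Z A2B] := @op_lin _ _ _ A2lin.
have [B0 BD BZ BB] := @op_lin _ _ _ Blin.
have posF : forall A : H -> H, (forall (a : R[i]) x y, A (a *: x + y) = a *: A x + A y) ->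
   (forall x, 0 <= ip (A x) x) ->
   [/\ (forall x y, ip (A x) y = ip x (A y)),
       (forall x, ip (A x) x = 0 -> A x = 0) &
       (forall r v, (forall a, complex.Re (ip (A r) r) <=
           complex.Re (ip (A (r + a *: v)) (r + a *: v))) -> ip (A r) v = 0)].
  move=> A Alin Apos.
  have hF1 : forall a x y z, ip (A (a *: x + y)) z = a * ip (A x) z + ip (A y) z.
    by move=> a x y z; rewrite Alin hlin.
  have hF2 : forall a x y z, ip (A z) (a *: x + y) = a^* * ip (A z) x + ip (A z) y.
    by move=> *; rewrite ip2.
  have hh := @form_herm _ _ (fun x y => ip (A x) y) hF1 hF2 Apos.
  have hm := @form_min _ _ (fun x y => ip (A x) y) hF1 hF2 Apos.
  split.
  - by move=> x y; rewrite (hsym x) -hh.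
  - move=> x hx; apply: hdef; apply: (hm x (A x)) => a.
    by rewrite hx /=; apply: Re_ge0.
  - exact: hm.
have [adj1 zero1 min1] := posF A1 A1lin A1pos.
have [adj2 zero2 min2] := posF A2 A2lin A2pos.
have hAn : forall A : H -> H, (forall x, 0 <= ip (A x) x) -> forall a b,
    Anorm ip A a <= Anorm ip A b -> complex.Re (ip (A a) a) <= complex.Re (ip (A b) b).
  by move=> A Apos a b; rewrite /Anorm ler_sqrt // Re_ge0.
have NE1 : forall y u, ip (A1 (y - B (G y))) (B u) = 0.
  move=> y u; apply: min1 => a.
  have := hG1 y (G y - a *: u); move/(hAn _ A1pos).
  by rewrite BB BZ opprB addrCA [X in _ <= complex.Re (ip (A1 X) X) -> _]addrC.
have NE1' : forall y u, ip (A1 y) (B u) = ip (A1 (B (G y))) (B u).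
  move=> y u; apply/eqP; rewrite -subr_eq0 -ipB1 -A1B; apply/eqP; exact: NE1.
have P1a : forall x, A1 (B (G (B x))) = A1 (B x).
  move=> x; apply/esym/eqP; rewrite -subr_eq0 -A1B; apply/eqP; apply: zero1.
  by have := NE1 (B x) (x - G (B x)); rewrite BB.
have P1b : forall S, is_adjoint ip (fun x => B (G x)) S ->
      forall x, A1 (B (G x)) = S (A1 x).
  move=> S hS x; apply: nondeg => z.
  have e1 : ip z (A1 (B (G x))) = ip (A1 (B (G z))) (B (G x)) by rewrite -adj1 NE1'.
  have e2 : ip (B (G z)) (A1 x) = ip (A1 (B (G z))) (B (G x)).
    by rewrite hsym NE1' -hsym adj1.
  by rewrite -(hS z (A1 x)) /= e1 e2.
have LSSsh : forall y z, A1 (B z) = 0 -> is_LSS ip A1 B y (G y + z).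
  move=> y z hz x; have := hG1 y x.
  suff -> : Anorm ip A1 (y - B (G y + z)) = Anorm ip A1 (y - B (G y)) by [].
  by rewrite /Anorm BD opprD addrA A1B hz subr0 ipB2 NE1 subr0.
have NE2 : forall y z, A1 (B z) = 0 -> ip (A2 (G y)) z = 0.
  move=> y z hz; apply: min2 => a; apply: (hAn _ A2pos); apply: hG2.
  by apply: LSSsh; rewrite BZ A1Z hz scaler0.
have P2a : forall x, A2 (G (B (G x))) = A2 (G x).
  move=> x.
  have hz : A1 (B (G (B (G x)) - G x)) = 0 by rewrite BB A1B P1a subrr.
  apply/eqP; rewrite -subr_eq0 -A2B; apply/eqP; apply: zero2.
  by rewrite A2B ipB1 (NE2 _ _ hz) (NE2 _ _ hz) subrr.
have P2b : forall S, is_adjoint ip (fun x => G (B x)) S ->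
      forall x, A2 (G (B x)) = S (A2 x).
  move=> S hS x; apply: nondeg => w; rewrite -(hS w (A2 x)) /=.
  have hnx : A1 (B (x - G (B x))) = 0 by rewrite BB A1B P1a subrr.
  have hnw : A1 (B (w - G (B w))) = 0 by rewrite BB A1B P1a subrr.
  have e1 : ip (A2 (G (B w))) x = ip (A2 (G (B w))) (G (B x)).
    apply/eqP; rewrite -subr_eq0 -ipB2; apply/eqP; exact: (NE2 _ _ hnx).
  have e2 : ip (A2 w) (G (B x)) = ip (A2 (G (B w))) (G (B x)).
    apply/eqP; rewrite -subr_eq0 -ipB1 -A2B adj2 hsym (NE2 _ _ hnw).
    by rewrite rmorph0 eqxx.
  by rewrite -adj2 -adj2 e2 e1.
by split; split.
Qed.
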